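(* Let $A$ be a T-brace whose additive group is torsion-free. If $A$ is $\star$-hypercentral, then $A$ is abelian (i.e. $a\star b=0$, equivalently $ab=a+b$, for all $a,b\in A$).
   Context: A (left) brace is a set $A$ with two operations $+$ and $\cdot$ such that $(A,+)$ is an abelian group, $(A,\cdot)$ is a group, and $a(b+c)=ab+ac-a$ for all $a,b,c\in A$. Put $a\star b=ab-a-b$. A subbrace is a subset which is a subgroup of both $(A,+)$ and $(A,\cdot)$; a subbrace $L$ is an ideal if $a\star z, z\star a\in L$ for all $a\in A$, $z\in L$, and then the quotient brace $A/L$ is defined. $A$ is a T-brace if whenever $I$ is an ideal of $J$ and $J$ is an ideal of $A$, then $I$ is an ideal of $A$. The $\star$-center is $\zeta(\star,A)=\{a\in A: a\star x=x\star a=0 \ \forall x\in A\}$. The upper $\star$-central series: $\zeta_0(\star,A)=0$, $\zeta_{\alpha+1}(\star,A)/\zeta_\alpha(\star,A)=\zeta(\star,A/\zeta_\alpha(\star,A))$, unions at limit ordinals; its last term is $\zeta_\infty(\star,A)$. $A$ is $\star$-hypercentral if $A=\zeta_\infty(\star,A)$. *)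

(* Defs.v *)
From HB Require Import structures.
From mathcomp Require Import all_boot all_algebra.
Set Implicit Arguments. Unset Strict Implicit. Unset Printing Implicit Defensive.
Import GRing.Theory.
Local Open Scope ring_scope.

Record brace := Brace {
  bcar :> zmodType;
  bmul : bcar -> bcar -> bcar;
  binv : bcar -> bcar;
  bone : bcar;
  bmulA : forall a b c, bmul a (bmul b c) = bmul (bmul a b) c;
  bmul1l : forall a, bmul bone a = a;
  bmul1r : forall a, bmul a bone = a;
  bmulVl : forall a, bmul (binv a) a = bone;
  bmulVr : forall a, bmul a (binv a) = bone;
  bdistr : forall a b c, bmul a (b + c) = bmul a b + bmul a c - a
}.

Section BraceDefs.
Variable A : brace.

Definition star (a b : A) : A := bmul a b - a - b.

Definition subbrace (L : A -> Prop) : Prop :=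
  (L 0 /\ (forall x y, L x -> L y -> L (x + y)) /\ (forall x, L x -> L (- x))) /\
  (L (bone A) /\ (forall x y, L x -> L y -> L (bmul x y))
    /\ (forall x, L x -> L (binv x))).

Definition ideal_of (I J : A -> Prop) : Prop :=
  [/\ subbrace J, subbrace I, (forall z, I z -> J z)
    & forall a z, J a -> I z -> I (star a z) /\ I (star z a)].

Definition ideal (I : A -> Prop) : Prop := ideal_of I (fun _ => True).

Definition T_brace : Prop :=
  forall I J : A -> Prop, ideal_of I J -> ideal J -> ideal I.

Definition torsion_free : Prop := forall (a : A) (n : nat), a *+ n.+1 = 0 -> a = 0.

(* zeta_infty(star, A): the last term of the upper star-central series.
   zeta_{alpha+1} = {a | forall x, a*x, x*a in zeta_alpha}, zeta_0 = 0, unions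
   at limits; its union is the least fixed point of the monotone operator
   Z |-> {0} u {a | forall x, a*x \in Z /\ x*a \in Z}, given inductively. *)
Inductive hypercenter : A -> Prop :=
  | hyper_intro a :
      (a = 0 \/ forall x, hypercenter (star a x) /\ hypercenter (star x a)) ->
      hypercenter a.

Definition star_hypercentral : Prop := forall a : A, hypercenter a.

Definition brace_abelian : Prop := forall a b : A, star a b = 0.

End BraceDefs.

(* Main.v *)
Require Import Defs.
From mathcomp Require Import all_boot all_algebra.
From mathcomp Require Import zify.
Set Implicit Arguments. Unset Strict Implicit. Unset Printing Implicit Defensive.
Import GRing.Theory.
Local Open Scope ring_scope.

Ltac zeq := rewrite ?/star; apply/eqP; rewrite -subr_eq0; apply/eqP; rewrite -[LHS]add0r ?opprD ?opprK !addrA.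
Ltac tolast t := do 60 try rewrite [in LHS](addrAC _ t).
Ltac canc t := tolast t; tolast (-t); rewrite addrK.
Ltac zfin := by rewrite ?add0r ?addr0.
Ltac zauto := zeq; repeat (match goal with |- context [ - ?t ] => canc t end); zfin.

Lemma bmulx0 (A : brace) (a : A) : bmul a 0 = a.
Proof.
have := bdistr a 0 0; rewrite addr0 => /eqP.
rewrite eq_sym -subr_eq0 => /eqP H.
apply/eqP; rewrite -subr_eq0; apply/eqP; rewrite -[RHS]H.
zeq. canc (bmul a 0). canc (bmul a 0). canc a. zfin.
Qed.

Lemma bone0 (A : brace) : bone A = 0.
Proof. by rewrite -[LHS](bmulx0 (bone A)) bmul1l. Qed.

Lemma bmul0x (A : brace) (a : A) : bmul 0 a = a.
Proof. by rewrite -(bone0 A) bmul1l. Qed.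

Lemma bmulE (A : brace) (a b : A) : bmul a b = a + b + star a b.
Proof. rewrite /star. zeq. canc a. canc b. canc (bmul a b). zfin. Qed.

Lemma star0l (A : brace) (x : A) : star 0 x = 0.
Proof. by rewrite /star bmul0x subr0 subrr. Qed.

Lemma star0r (A : brace) (x : A) : star x 0 = 0.
Proof. by rewrite /star bmulx0 subrr subr0. Qed.

Lemma starDr (A : brace) (x y z : A) : star x (y + z) = star x y + star x z.
Proof.
rewrite /star bdistr. zeq. canc x. canc x. canc y. canc z.
canc (bmul x y). canc (bmul x z). zfin.
Qed.

Lemma starNr (A : brace) (x y : A) : star x (- y) = - star x y.
Proof.
apply/eqP; rewrite -addr_eq0 -starDr addrC subrr; apply/eqP; exact: star0r.
Qed.

Lemma starMnr (A : brace) (x y : A) (k : nat) : star x (y *+ k) = star x y *+ k.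
Proof.
elim: k => [|k IH]; first by rewrite !mulr0n star0r.
by rewrite !mulrS starDr IH.
Qed.

Lemma starMzr (A : brace) (x y : A) (n : int) : star x (y *~ n) = star x y *~ n.
Proof.
case: n => k; first by rewrite -!pmulrn starMnr.
by rewrite NegzE !mulrNz -!pmulrn starNr starMnr.
Qed.

Lemma starMl (A : brace) (u w x : A) :
  star (bmul u w) x = star u (star w x) + star w x + star u x.
Proof.
rewrite {1}/star -bmulA [bmul w x]bmulE bdistr bdistr.
rewrite [bmul u x]bmulE [bmul u (star w x)]bmulE.
zauto.
Qed.

Definition Z1 (A : brace) (z : A) : Prop := forall x, star z x = 0 /\ star x z = 0.
Definition Z2 (A : brace) (y : A) : Prop := forall x, Z1 (star y x) /\ Z1 (star x y).

Lemma add_central_l (A : brace) (y w x : A) : Z1 w -> star (y + w) x = star y x.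
Proof.
move=> Hw.
have -> : y + w = bmul y w by rewrite bmulE (proj2 (Hw y)) addr0.
by rewrite starMl (proj1 (Hw x)) star0r !add0r.
Qed.

Lemma Z1_0 (A : brace) : Z1 (0 : A).
Proof. by move=> x; rewrite star0l star0r. Qed.

Lemma starNl (A : brace) (y x : A) :
  (forall x, Z1 (star y x)) -> Z1 (star (- y) y) -> star (- y) x = - star y x.
Proof.
move=> H1 H2.
have E : bmul (- y) y = star (- y) y by rewrite bmulE addNr add0r.
have := starMl (- y) y x; rewrite E (proj1 (H2 x)) (proj2 (H1 x _)) add0r.
move/eqP; rewrite eq_sym addrC addr_eq0 => /eqP ->. by [].
Qed.

Lemma Z1_D (A : brace) (z1 z2 : A) : Z1 z1 -> Z1 z2 -> Z1 (z1 + z2).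
Proof.
move=> H1 H2 x; split.
  by rewrite add_central_l // (proj1 (H1 x)).
by rewrite starDr (proj2 (H1 x)) (proj2 (H2 x)) addr0.
Qed.

Lemma Z1_N (A : brace) (z : A) : Z1 z -> Z1 (- z).
Proof.
move=> H x; split; last by rewrite starNr (proj2 (H x)) oppr0.
rewrite starNl ?(proj1 (H x)) ?oppr0 //.
  by move=> x'; rewrite (proj1 (H x')); exact: Z1_0.
by rewrite (proj2 (H _)); exact: Z1_0.
Qed.

Lemma Z1_Mn (A : brace) (z : A) (k : nat) : Z1 z -> Z1 (z *+ k).
Proof.
move=> H; elim: k => [|k IH]; first by rewrite mulr0n; exact: Z1_0.
by rewrite mulrS; apply: Z1_D.
Qed.

Lemma Z1_Mz (A : brace) (z : A) (n : int) : Z1 z -> Z1 (z *~ n).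
Proof.
move=> H; case: n => k; first by rewrite -pmulrn; exact: Z1_Mn.
by rewrite NegzE mulrNz -pmulrn; apply: Z1_N; exact: Z1_Mn.
Qed.

Lemma Z1_Z2 (A : brace) (z : A) : Z1 z -> Z2 z.
Proof. by move=> H x; rewrite (proj1 (H x)) (proj2 (H x)); split; exact: Z1_0. Qed.

Lemma starDl2 (A : brace) (y1 y2 x : A) : Z2 y1 -> Z2 y2 ->
  star (y1 + y2) x = star y1 x + star y2 x.
Proof.
move=> H1 H2.
have -> : y1 + y2 = bmul y1 y2 + - star y1 y2 by rewrite bmulE addrK.
rewrite add_central_l; last by apply: Z1_N; exact: (proj1 (H1 y2)).
by rewrite starMl (proj2 (proj1 (H2 x) y1)) add0r addrC.
Qed.

Lemma starNl2 (A : brace) (y x : A) : Z2 y -> star (- y) x = - star y x.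
Proof.
move=> H; apply: starNl; first by move=> x'; exact: (proj1 (H x')).
exact: (proj2 (H _)).
Qed.

Lemma Z2_D (A : brace) (y1 y2 : A) : Z2 y1 -> Z2 y2 -> Z2 (y1 + y2).
Proof.
move=> H1 H2 x; rewrite starDl2 // starDr; split; apply: Z1_D.
- exact: (proj1 (H1 x)).
- exact: (proj1 (H2 x)).
- exact: (proj2 (H1 x)).
- exact: (proj2 (H2 x)).
Qed.

Lemma Z2_N (A : brace) (y : A) : Z2 y -> Z2 (- y).
Proof.
move=> H x; rewrite starNl2 // starNr; split; apply: Z1_N.
- exact: (proj1 (H x)).
- exact: (proj2 (H x)).
Qed.

Lemma Z2_Mz (A : brace) (y : A) (n : int) : Z2 y -> Z2 (y *~ n).
Proof.
move=> H.
have Hn : forall k : nat, Z2 (y *+ k).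
  elim=> [|k IH]; first by rewrite mulr0n; apply: Z1_Z2; exact: Z1_0.
  by rewrite mulrS; apply: Z2_D.
case: n => k; first by rewrite -pmulrn.
by rewrite NegzE mulrNz -pmulrn; apply: Z2_N.
Qed.

Lemma starMzl2 (A : brace) (y x : A) (n : int) : Z2 y -> star (y *~ n) x = star y x *~ n.
Proof.
move=> H.
have Hn : forall k : nat, star (y *+ k) x = star y x *+ k.
  elim=> [|k IH]; first by rewrite !mulr0n star0l.
  rewrite !mulrS starDl2 ?IH //.
  by have := Z2_Mz k%:Z H; rewrite -pmulrn.
case: n => k; first by rewrite -!pmulrn.
rewrite NegzE !mulrNz -!pmulrn starNl2 ?Hn //.
by have := Z2_Mz k.+1%:Z H; rewrite -pmulrn.
Qed.

Lemma subbrace_of (A : brace) (S : A -> Prop) :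
  S 0 -> (forall u v, S u -> S v -> S (u + v)) -> (forall u, S u -> S (- u)) ->
  (forall s t, S s -> S t -> S (star s t)) ->
  (forall s, S s -> S (star (binv s) s)) -> subbrace S.
Proof.
move=> H0 HD HN HS HI; split; first by split=> //; split.
rewrite bone0; split=> //; split.
  by move=> x y Hx Hy; rewrite bmulE; apply HD; [apply HD | apply HS].
move=> x Hx.
have E := bmulVl x; rewrite bone0 bmulE -addrA in E.
move/eqP: E; rewrite addr_eq0 => /eqP ->.
by apply HN; apply HD => //; apply HI.
Qed.

Lemma TL (A : brace) (HT : T_brace A) (a : A) (Ha : Z2 a) (x : A) :
  (exists k l : int, star x a = a *~ k + star a a *~ l) /\
  (exists k l : int, star a x = a *~ k + star a a *~ l).
Proof.
have Hc : Z1 (star a a) := proj1 (Ha a).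
pose J := fun y : A => exists z (n : int), Z1 z /\ y = z + a *~ n.
pose I := fun y : A => exists k l : int, y = a *~ k + star a a *~ l.
have JZ2 : forall y, J y -> Z2 y.
  move=> y [z [n [Hz ->]]]; apply: Z2_D; [exact: Z1_Z2 | exact: Z2_Mz].
have Z1J : forall z, Z1 z -> J z.
  by move=> z Hz; exists z, 0; rewrite mulr0z addr0.
have Jsub : subbrace J.
  apply: subbrace_of.
  - apply: Z1J; exact: Z1_0.
  - move=> u v [z1 [n1 [H1 ->]]] [z2 [n2 [H2 ->]]]; exists (z1 + z2), (n1 + n2).
    split; first exact: Z1_D. rewrite mulrzDr. zauto.
  - move=> u [z [n [H ->]]]; exists (- z), (- n); split; first exact: Z1_N.
    by rewrite mulrNz opprD.
  - move=> s t Hs _; apply: Z1J; exact: (proj1 (JZ2 s Hs t)).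
  - move=> s Hs; apply: Z1J; exact: (proj2 (JZ2 s Hs (binv s))).
have Jid : ideal J.
  split.
  - by split; split => //; split.
  - exact: Jsub.
  - by [].
  move=> y z _ Hz; split; apply: Z1J.
  - exact: (proj2 (JZ2 z Hz y)).
  - exact: (proj1 (JZ2 z Hz y)).
have IJ : forall y, I y -> J y.
  move=> y [k [l ->]]; exists (star a a *~ l), k; split; first exact: Z1_Mz.
  by rewrite addrC.
have Ja : forall j, J j -> exists n : int, star j a = star a a *~ n /\ star a j = star a a *~ n.
  move=> j [z [n [Hz ->]]]; exists n; split.
  - rewrite starDl2; [|exact: Z1_Z2|exact: Z2_Mz].
    by rewrite (proj1 (Hz a)) add0r starMzl2.
  - by rewrite starDr (proj2 (Hz a)) add0r starMzr.
have JI : forall j i, J j -> I i -> I (star j i) /\ I (star i j).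
  move=> j i Hj [k [l ->]]; have [n [E1 E2]] := Ja j Hj.
  split; exists 0, (n * k); rewrite mulr0z add0r mulrzA.
  - by rewrite starDr !starMzr (proj2 (Hc j)) mul0rz addr0 E1.
  - rewrite starDl2; [|exact: Z2_Mz|apply: Z1_Z2; exact: Z1_Mz].
    by rewrite !starMzl2 ?(proj1 (Hc j)) ?mul0rz ?addr0 ?E2 //; exact: Z1_Z2.
have Isub : subbrace I.
  apply: subbrace_of.
  - by exists 0, 0; rewrite !mulr0z addr0.
  - move=> u v [k1 [l1 ->]] [k2 [l2 ->]]; exists (k1 + k2), (l1 + l2).
    rewrite !mulrzDr. zauto.
  - move=> u [k [l ->]]; exists (- k), (- l); by rewrite !mulrNz opprD.
  - move=> s t Hs Ht; exact: (proj1 (JI s t (IJ s Hs) Ht)).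
  - move=> s Hs; apply: (proj1 (JI (binv s) s _ Hs)).
    by case: Jsub => _ [_ [_ HI]]; apply: HI; apply: IJ.
have Hof : ideal_of I J by split.
case: (HT I J Hof Jid) => _ _ _ H.
have Ia : I a by exists 1, 0; rewrite mulr1z mulr0z addr0.
exact: H x a Logic.I Ia.
Qed.

Lemma tfz (A : brace) (Htf : torsion_free A) (y : A) (n : int) :
  y *~ n = 0 -> n != 0 -> y = 0.
Proof.
case: n => k.
  case: k => [|k] //; rewrite -pmulrn => H _; exact: Htf H.
by rewrite NegzE mulrNz -pmulrn => /eqP; rewrite oppr_eq0 => /eqP H _; exact: Htf H.
Qed.

Lemma Mlem (A : brace) (Htf : torsion_free A) (a : A) (n : int) :
  Z2 a -> n != 0 -> Z1 (a *~ n) -> Z1 a.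
Proof.
move=> Ha Hn H x; split.
  apply: (tfz Htf _ Hn); rewrite -starMzl2 //; exact: (proj1 (H x)).
apply: (tfz Htf _ Hn); rewrite -starMzr; exact: (proj2 (H x)).
Qed.

Lemma mainlem (A : brace) (HT : T_brace A) (Htf : torsion_free A) (a : A) :
  Z2 a -> Z1 a.
Proof.
move=> Ha.
have Hc : Z1 (star a a) := proj1 (Ha a).
have c0 : star a a = 0.
  have [[k [l E]] _] := TL HT (Z2_Mz 2 Ha) a.
  rewrite starMzl2 // !starMzr -!mulrzA in E.
  case: (eqVneq k 0) => [k0|kn0].
    move: E; rewrite k0 mulr0z add0r => /eqP; rewrite -subr_eq0 -mulrzBr => /eqP E.
    apply: (tfz Htf E); lia.
  have H2 : Z1 (a *~ (2 * k)).
    have -> : a *~ (2 * k) = star a a *~ 2 - star a a *~ (2 * (2 * l)).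
      by rewrite E addrK.
    by apply: Z1_D; [exact: Z1_Mz | apply: Z1_N; exact: Z1_Mz].
  have := Mlem Htf Ha _ H2; move=> /(_ ltac:(lia)) Z1a.
  exact: (proj1 (Z1a a)).
move=> x; split.
  have [_ [k [l E]]] := TL HT Ha x.
  rewrite c0 mul0rz addr0 in E.
  case: (eqVneq k 0) => [k0|kn0]; first by rewrite E k0 mulr0z.
  have H1 : Z1 (a *~ k) by rewrite -E; exact: (proj1 (Ha x)).
  exact: (proj1 (Mlem Htf Ha kn0 H1 x)).
have [[k [l E]] _] := TL HT Ha x.
rewrite c0 mul0rz addr0 in E.
case: (eqVneq k 0) => [k0|kn0]; first by rewrite E k0 mulr0z.
have H1 : Z1 (a *~ k) by rewrite -E; exact: (proj2 (Ha x)).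
exact: (proj2 (Mlem Htf Ha kn0 H1 x)).
Qed.

Lemma hc_Z1 (A : brace) (HT : T_brace A) (Htf : torsion_free A) :
  forall a : A, hypercenter a -> Z1 a.
Proof.
fix IH 2.
move=> a [a0 [->|H]]; first exact: Z1_0.
apply: mainlem => // x.
case: (H x) => h1 h2; split; [exact: IH h1 | exact: IH h2].
Qed.

Theorem corollary1 (A : brace) :
  T_brace A -> torsion_free A -> star_hypercentral A -> brace_abelian A.
Proof.
move=> HT Htf Hh a b; exact: proj1 (hc_Z1 HT Htf (Hh a) b).
Qed.
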